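(* Let $G$ be a very well-covered graph with $2n$ vertices, $K$ a field and $S=K[x_v : v\in V(G)]$. Then $\dim(S/NI(G))\geq n$. If moreover $G$ is well-dominated, then $\dim(S/NI(G))=n$.
   Context: $G$ is very well-covered if it has no isolated vertices and every maximal independent set has exactly $|V(G)|/2$ elements. $N_G[v]$ is the closed neighborhood of $v$ and $NI(G)=\big(\prod_{w\in N_G[v]} x_w : v\in V(G)\big)$ is the closed neighborhood ideal. A dominating set is a set of vertices meeting every closed neighborhood; $G$ is well-dominated if all its minimal (with respect to inclusion) dominating sets have the same cardinality. $K$ is an infinite field. *)

(* Defs.v *)
From HB Require Import structures.
From mathcomp Require Import all_boot all_order all_algebra.
From mathcomp Require Export mpoly.
Set Implicit Arguments. Unset Strict Implicit. Unset Printing Implicit Defensive.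
Import GRing.Theory.
Local Open Scope ring_scope.

Definition simple_graph (T : finType) (e : rel T) : Prop :=
  ssrbool.symmetric e /\ ssrbool.irreflexive e.

Definition cnbhd (T : finType) (e : rel T) (v : T) : {set T} :=
  [set w | (w == v) || e v w].

Definition independent (T : finType) (e : rel T) (A : {set T}) : Prop :=
  forall x y, x \in A -> y \in A -> ~~ e x y.

Definition maximal_independent (T : finType) (e : rel T) (A : {set T}) : Prop :=
  independent e A /\ forall B : {set T}, A \proper B -> ~ independent e B.

Definition no_isolated (T : finType) (e : rel T) : Prop :=
  forall v, exists w, e v w.

Definition very_well_covered (T : finType) (e : rel T) : Prop :=
  no_isolated e /\
  forall A : {set T}, maximal_independent e A -> (#|A| * 2 = #|T|)%N.

Definition dominating (T : finType) (e : rel T) (D : {set T}) : Prop :=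
  forall v, D :&: cnbhd e v != set0.

Definition minimal_dominating (T : finType) (e : rel T) (D : {set T}) : Prop :=
  dominating e D /\ forall D' : {set T}, D' \proper D -> ~ dominating e D'.

Definition well_dominated (T : finType) (e : rel T) : Prop :=
  forall D1 D2 : {set T}, minimal_dominating e D1 -> minimal_dominating e D2 ->
    #|D1| = #|D2|.

Definition infinite_field (K : fieldType) : Prop :=
  forall s : seq K, exists x : K, x \notin s.

Definition vvar (K : fieldType) (T : finType) (v : T) : {mpoly K[#|T|]} :=
  'X_(enum_rank v).

Definition cnbhd_monomial (K : fieldType) (T : finType) (e : rel T) (v : T)
  : {mpoly K[#|T|]} :=
  \prod_(w in cnbhd e v) vvar K w.

Definition pset (R : comRingType) := R -> Prop.

Definition NI (K : fieldType) (T : finType) (e : rel T) : pset {mpoly K[#|T|]} :=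
  fun p => exists c : T -> {mpoly K[#|T|]},
    p = \sum_(v : T) c v * cnbhd_monomial K e v.

Definition is_ideal (R : comRingType) (I : pset R) : Prop :=
  [/\ I 0, (forall a b, I a -> I b -> I (a + b)) & (forall r a, I a -> I (r * a))].

Definition is_prime_ideal (R : comRingType) (P : pset R) : Prop :=
  [/\ is_ideal P, ~ P 1 & forall a b, P (a * b) -> P a \/ P b].

Definition strict_subset (R : comRingType) (A B : pset R) : Prop :=
  (forall p, A p -> B p) /\ exists p, B p /\ ~ A p.

(* a chain P_0 < P_1 < ... < P_k of prime ideals of R containing I, i.e. a chain
   of prime ideals of length k in R/I *)
Definition prime_chain_over (R : comRingType) (I : pset R) (k : nat)
  (c : nat -> pset R) : Prop :=
  (forall i, (i <= k)%N -> is_prime_ideal (c i) /\ forall p, I p -> c i p) /\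
  (forall i, (i < k)%N -> strict_subset (c i) (c i.+1)).

Definition krull_dim_quot_ge (R : comRingType) (I : pset R) (d : nat) : Prop :=
  exists c, prime_chain_over I d c.

Definition krull_dim_quot_eq (R : comRingType) (I : pset R) (d : nat) : Prop :=
  krull_dim_quot_ge I d /\ forall k c, prime_chain_over I k c -> (k <= d)%N.

Arguments NI K [T] e _.

(* Main.v *)
Require Import Defs.
From mathcomp Require Import all_boot all_order all_algebra.
From mathcomp Require Import mpoly.
From mathcomp Require Import zify.
From Stdlib Require Import ClassicalEpsilon.
Set Implicit Arguments. Unset Strict Implicit. Unset Printing Implicit Defensive.
Import GRing.Theory.
Local Open Scope ring_scope.

Section Poly.
Variables (K : fieldType) (N : nat).
Local Notation S := {mpoly K[N]}.

Definition tA (A : {set 'I_N}) : N.-tuple S :=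
  [tuple (if i \in A then 0 else 'X_i) | i < N].
Definition sig (A : {set 'I_N}) (p : S) : S := p \mPo tA A.
Definition avoid (A : {set 'I_N}) (m : 'X_{1..N}) := [forall i in A, m i == 0%N].

Lemma sigX A m : sig A 'X_[m] = if avoid A m then 'X_[m] else 0.
Proof.
rewrite /sig comp_mpolyX.
case: ifP => [/forall_inP av | /negbT].
  rewrite mpolyXE_id; apply: eq_bigr => i _; rewrite tnth_mktuple.
  by case: ifP => // iA; rewrite (eqP (av i iA)) !expr0.
rewrite negb_forall_in => /exists_inP [i iA mi].
rewrite (bigD1 i) //= tnth_mktuple iA expr0n (negbTE mi) mul0r //.
Qed.

Lemma sig_coef A p m : (sig A p)@_m = if avoid A m then p@_m else 0.
Proof.
elim/mpolyind: p => [|c m' p _ _ IH].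
  by rewrite /sig raddf0; case: ifP; rewrite /= ?raddf0.
rewrite /sig raddfD /= comp_mpolyZ -/(sig A 'X_[m']) sigX mcoeffD -/(sig A p) IH.
rewrite mcoeffZ mcoeffD mcoeffZ mcoeffX.
case: (eqVneq m' m) => [->|ne]; case: ifP => //= _.
all: try by rewrite ?raddf0 ?mcoeffX ?(negbTE ne) ?mulr0 ?add0r.
by rewrite mcoeffX eqxx.
Qed.

Lemma sig_Xi A i : sig A 'X_i = if i \in A then 0 else 'X_i.
Proof. by rewrite /sig comp_mpolyXU -tnth_nth tnth_mktuple. Qed.

Lemma Xm_in (P : pset S) (A : {set 'I_N}) m : is_ideal P -> (forall i, i \in A -> P 'X_i) ->
  ~~ avoid A m -> P 'X_[m].
Proof.
case=> P0 PD PM hA; rewrite negb_forall_in => /exists_inP [i iA mi].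
rewrite mpolyXE_id (bigD1 i) //=.
case E: (m i) mi => [|k] // _.
rewrite exprS -mulrA mulrC; exact: PM (hA i iA).
Qed.

Lemma sig_diff (P : pset S) (A : {set 'I_N}) : is_ideal P -> (forall i, i \in A -> P 'X_i) ->
  forall p, P (p - sig A p).
Proof.
move=> hI hA; have [P0 PD PM] := hI.
elim/mpolyind => [|c m p _ _ IH]; first by rewrite /sig raddf0 subr0.
have -> : c *: 'X_[m] + p - sig A (c *: 'X_[m] + p) =
   c%:MP * ('X_[m] - sig A 'X_[m]) + (p - sig A p).
  by rewrite /sig raddfD /= comp_mpolyZ mul_mpolyC scalerBr; rewrite opprD addrACA.
apply: PD => //; apply: PM; rewrite sigX; case: ifP => [_|/negbT av].
  by rewrite subrr.
by rewrite subr0; apply: Xm_in av.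
Qed.

Definition ker (A : {set 'I_N}) : pset S := fun p => sig A p = 0.

Lemma ker_prime A : is_prime_ideal (ker A).
Proof.
rewrite /ker /sig; split.
- split=> [|a b ha hb|r a ha]; first by rewrite raddf0.
    by rewrite raddfD /= ha hb addr0.
  by rewrite rmorphM /= ha mulr0.
- by rewrite rmorph1; apply/eqP; rewrite oner_eq0.
- by move=> a b; rewrite rmorphM /= => /eqP; rewrite mulf_eq0 => /orP [/eqP|/eqP]; auto.
Qed.

End Poly.


Lemma LA (K : fieldType) (C : finType) (m : nat) (a : nat -> C -> K) :
  (forall c : nat -> K, (forall x, \sum_(i < m) c i * a i x = 0) ->
      forall i, (i < m)%N -> c i = 0) -> (m <= #|C|)%N.
Proof.
move=> H.
pose M : 'M[K]_(m, #|C|) := \matrix_(i, j) a i (enum_val j).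
suff : row_free M by rewrite /row_free => /eqP <-; apply: rank_leq_col.
rewrite -kermx_eq0; apply/eqP/matrixP => i j; rewrite [RHS]mxE.
pose r := row i (kermx M).
have hr : r *m M = 0 by rewrite -row_mul mulmx_ker row0.
pose c k := if @insub _ (fun k => (k < m)%N) 'I_m k is Some k' then r 0 k' else 0.
have cE (k : 'I_m) : c k = r 0 k by rewrite /c valK.
have := H c _ j (ltn_ord j); rewrite cE mxE => -> //.
move=> x; move/matrixP: hr => /(_ 0 (enum_rank x)).
rewrite !mxE => E; rewrite -{}[RHS]E.
by apply: eq_bigr => k _; rewrite cE /M !mxE enum_rankK.
Qed.


Section Fam.
Variables (K : fieldType) (N : nat).
Local Notation S := {mpoly K[N]}.

Definition findep (P : pset S) m (F : nat -> S) :=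
  forall c : nat -> K, P (\sum_(i < m) c i *: F i) -> forall i, (i < m)%N -> c i = 0.

Lemma combine (P Q : pset S) f m l F G : is_prime_ideal P -> is_ideal Q ->
  (forall p, P p -> Q p) -> Q f -> ~ P f -> findep Q m F -> findep P l G ->
  findep P (m + l) (fun j => if (j < m)%N then F j else f * G (j - m)%N).
Proof.
move=> [[P0 PD PM] P1 Pp] [Q0 QD QM] PQ Qf Pf hF hG c.
rewrite big_split_ord /=.
under eq_bigr => i _ do rewrite ltn_ord.
under [X in _ + X]eq_bigr => i _ do rewrite ltnNge leq_addr /= addKn.
set s1 := \sum_(i < m) _; set s2 := \sum_(i < l) _ => Ps.
have s2E : s2 = (\sum_(i < l) c (m + i)%N *: G i) * f.
  by rewrite mulr_suml; apply: eq_bigr => i _; rewrite -scalerAl mulrC.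
have Qs1 : Q s1.
  have -> : s1 = (s1 + s2) + (-1) * s2 by rewrite mulN1r addrK.
  by apply: (QD); [apply: (PQ) | apply: (QM); rewrite s2E; apply: (QM)].
have hc1 := hF c Qs1.
have s10 : s1 = 0 by apply: big1 => i _; rewrite hc1 // scale0r.
move: Ps; rewrite s10 add0r s2E; case/Pp => [Pg|//].
have hc2 := hG (fun i => c (m + i)%N) Pg.
move=> i lti; case: (ltnP i m) => [/hc1 //|le].
by rewrite -(subnKC le); apply: hc2; rewrite ltn_subLR.
Qed.

Lemma msizeMle (p q : S) : (msize (p * q) <= (msize p).-1 + msize q)%N.
Proof.
have [->|p0] := eqVneq p 0; first by rewrite mul0r msize0.
have [->|q0] := eqVneq q 0; first by rewrite mulr0 msize0.
rewrite msizeM //; have : (0 < msize p)%N.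
  by rewrite lt0n msize_poly_eq0.
by case: (msize p).
Qed.

Lemma iterfam (P Q : pset S) f m F t : is_prime_ideal P -> is_ideal Q ->
  (forall p, P p -> Q p) -> Q f -> ~ P f -> findep Q m F ->
  (forall j, (j < m)%N -> (msize (F j) <= t)%N) ->
  forall T, exists G, findep P (T * m)%N G /\
    forall j, (j < T * m)%N -> (msize (G j) <= t + T * (msize f).-1)%N.
Proof.
move=> hP hQ PQ Qf Pf hF hFs; elim=> [|T [G [hG hGs]]].
  by exists F; split=> [c _ i|j]; rewrite mul0n.
exists (fun j => if (j < m)%N then F j else f * G (j - m)%N); split.
  by rewrite mulSn; apply: (combine hP hQ PQ Qf Pf hF hG).
move=> j; rewrite mulSn => ltj; case: ifP => [/hFs|jm].
  by move=> h; apply: leq_trans h _; apply: leq_addr.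
apply: leq_trans (msizeMle _ _) _.
have := hGs (j - m)%N; rewrite ltn_subLR ?ltj; last by rewrite leqNgt jm.
move=> /(_ isT); rewrite mulSn; move: (mmeasure mdeg f).-1 (mmeasure mdeg (G (j - m)%N)) => a b h; lia.
Qed.

End Fam.


Section Claim0.
Variables (K : fieldType) (N : nat).
Local Notation S := {mpoly K[N]}.

Lemma mnm_le_mdeg (mu : 'X_{1..N}) i : (mu i <= mdeg mu)%N.
Proof. by rewrite mdegE (bigD1 i) //= leq_addr. Qed.

Lemma claim0 (P : pset S) (A : {set 'I_N}) m F t : is_ideal P ->
  (forall i, i \in A -> P 'X_i) -> findep P m F ->
  (forall j, (j < m)%N -> (msize (F j) <= t)%N) -> (m <= t ^ #|~: A|)%N.
Proof.
move=> hI hA hF hFs.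
pose X := {i : 'I_N | i \notin A}.
have cX : #|{: X}| = #|~: A|.
  by rewrite card_sig; apply: eq_card => i; rewrite !inE.
pose mon (f : {ffun X -> 'I_t}) : 'X_{1..N} :=
  [multinom (if @insub _ (fun i => i \notin A) X i is Some x then val (f x) else 0%N) | i < N].
rewrite -cX -[t in (t ^ _)%N]card_ord -card_ffun.
apply: (@LA K _ m (fun j f => (sig A (F j))@_(mon f))) => c hc.
set p := \sum_(i < m) c i *: F i.
have sp0 : sig A p = 0.
  rewrite /p /sig raddf_sum /=.
  apply/mpolyP => mu; rewrite mcoeff0 raddf_sum /=.
  under eq_bigr => j _ do rewrite comp_mpolyZ mcoeffZ.
  case: (boolP (avoid A mu && [forall i, (mu i < t)%N])) => [/andP [av /forallP lt]|nb].
    pose f := [ffun x : X => Ordinal (lt (val x))].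
    have -> : mu = mon f.
      apply/mnmP => i; rewrite mnmE; case: insubP => [x xnA <-|nA].
        by rewrite ffunE.
      by move: nA; rewrite negbK => iA; move/forall_inP: av => /(_ i iA) /eqP.
    exact: hc.
  apply: big1 => j _; rewrite -/(sig A (F j)) sig_coef.
  case: ifP => av; last by rewrite mulr0.
  move: nb; rewrite av /= negb_forall => /existsP [i]; rewrite -leqNgt => lei.
  have lem : (msize (F j) <= mdeg mu)%N.
    apply: leq_trans (hFs j (ltn_ord j)) _; exact: leq_trans lei (mnm_le_mdeg _ _).
  by rewrite (memN_msupp_eq0 (msize_mdeg_ge lem)) mulr0.
have : P (p - sig A p) by apply: sig_diff.
by rewrite sp0 subr0 => /hF.
Qed.

End Claim0.


Section Graph.
Variables (T : finType) (e : rel T).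

Definition indb (A : {set T}) := [forall x, forall y, (x \in A) ==> (y \in A) ==> ~~ e x y].
Lemma indbP A : reflect (independent e A) (indb A).
Proof.
apply: (iffP forallP) => [h x y xA yA|h x].
  by move/forallP: (h x) => /(_ y); rewrite xA yA.
by apply/forallP => y; apply/implyP => xA; apply/implyP => yA; apply: h.
Qed.

Definition domb D := [forall v, D :&: cnbhd e v != set0].
Lemma dombP D : reflect (dominating e D) (domb D).
Proof. by apply: (iffP forallP). Qed.

Lemma exists_maxind : exists I, maximal_independent e I.
Proof.
have h0 : indb set0 by apply/indbP => x y; rewrite inE.
case: (@arg_maxnP _ set0 indb (fun A => #|A|) h0) => I hI hmax.
exists I; split; first by apply/indbP.
move=> B pIB /indbP iB; have := hmax B iB.
by rewrite /= leqNgt proper_card.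
Qed.

Hypothesis sg : simple_graph e.

Lemma maxind_dom I : maximal_independent e I -> dominating e I.
Proof.
case: sg => sym irr [iI mI] v; apply/set0Pn.
case: (boolP (v \in I)) => vI.
  by exists v; rewrite !inE vI eqxx.
have : I \proper v |: I.
  rewrite properE subsetUr /=; apply/negP => /subsetP /(_ v).
  by rewrite !inE eqxx (negbTE vI) => /(_ isT).
move/mI => /indbP; rewrite negb_forall => /existsP [x].
rewrite negb_forall => /existsP [y]; rewrite !negb_imply.
case/and4P=> /setU1P [->|xI] /setU1P [->|yI] exy _.
- by rewrite irr in exy.
- by exists y; rewrite !inE yI exy orbT.
- by exists x; rewrite !inE xI sym exy orbT.
- by move: (iI x y xI yI); rewrite exy.
Qed.

Lemma maxind_mindom I : maximal_independent e I -> minimal_dominating e I.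
Proof.
move=> hI; split; first exact: maxind_dom.
case: hI => iI _ D' /properP [sub [v vI vD]] dD.
have /set0Pn [w] := dD v; rewrite !inE => /andP [wD /orP [/eqP wv|evw]].
  by rewrite -wv wD in vD.
by move: (iI v w vI (subsetP sub w wD)); rewrite evw.
Qed.

Lemma dom_mindom D : dominating e D -> exists D' : {set T}, D' \subset D /\ minimal_dominating e D'.
Proof.
move=> dD.
have h0 : (D \subset D) && domb D by rewrite subxx; apply/dombP.
case: (@arg_minnP _ D (fun B : {set T} => (B \subset D) && domb B) (fun A => #|A|) h0).
move=> D' /andP [sD' /dombP dD'] hmin.
exists D'; split=> //; split=> // B pB dB.
have := hmin B; rewrite (subset_trans (proper_sub pB) sD') /=.
have -> : domb B by apply/dombP.
by move=> /(_ isT); rewrite leqNgt proper_card.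
Qed.

End Graph.


Definition pb (P : Prop) : bool := if excluded_middle_informative P then true else false.
Lemma pbE (P : Prop) : pb P <-> P.
Proof. by rewrite /pb; case: excluded_middle_informative. Qed.

Lemma prime_prod (R : comRingType) (P : pset R) (I : eqType) (s : seq I) (F : I -> R) :
  is_prime_ideal P -> P (\prod_(x <- s) F x) -> exists2 x, x \in s & P (F x).
Proof.
move=> [_ P1 Pp]; elim: s => [|x s IH]; first by rewrite big_nil.
rewrite big_cons => /Pp [h|/IH [y ys hy]].
  by exists x; rewrite ?inE ?eqxx.
by exists y; rewrite // inE ys orbT.
Qed.

Lemma nth_notin_take (T : eqType) (x0 : T) (s : seq T) i :
  uniq s -> (i < size s)%N -> nth x0 s i \notin take i s.
Proof.
move=> us lti; move: us; rewrite -{1}(cat_take_drop i s) cat_uniq => /and3P [_ hd _].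
have hin : nth x0 s i \in drop i s.
  have -> : nth x0 s i = nth x0 (drop i s) 0 by rewrite nth_drop addn0.
  by rewrite mem_nth // size_drop subn_gt0.
apply/negP => h; move/negP: hd; apply; apply/hasP; by exists (nth x0 s i).
Qed.


Lemma X_neq0 (K : fieldType) N (i : 'I_N) : ('X_i : {mpoly K[N]}) != 0.
Proof.
apply/eqP => h; have := mcoeffXU K i i; rewrite h eqxx raddf0 => /eqP.
by rewrite eq_sym oner_eq0.
Qed.

Lemma NI_ker (K : fieldType) (T : finType) (e : rel T) (A : {set 'I_#|T|}) :
  (forall v, exists2 w, w \in cnbhd e v & enum_rank w \in A) ->
  forall p, NI K e p -> ker A p.
Proof.
move=> hA p [c ->]; rewrite /ker /sig raddf_sum; apply: big1 => v _ /=.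
rewrite rmorphM /=; have [w wN wA] := hA v.
rewrite /cnbhd_monomial rmorph_prod (bigD1 w) //= -/(sig A (vvar K w)) /vvar sig_Xi wA.
by rewrite mul0r mulr0.
Qed.

Lemma lower (K : fieldType) (T : finType) (e : rel T) (I : {set T}) n :
  dominating e I -> #|I| = n -> #|T| = (2 * n)%N -> krull_dim_quot_ge (NI K e) n.
Proof.
move=> dI cI cT.
have [s [us hs szs]] : exists s : seq T, [/\ uniq s, forall x, (x \in s) = (x \notin I) & size s = n].
  exists (enum (~: I)); split; first exact: enum_uniq.
    by move=> x; rewrite mem_enum inE.
  rewrite -cardE; have := cardsC I; rewrite cT cI; lia.
pose Aset j : {set 'I_#|T|} := enum_rank @: (I :|: [set x | x \in take j s]).
have memA j x : (enum_rank x \in Aset j) = (x \in I) || (x \in take j s).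
  by rewrite mem_imset ?inE //; apply: enum_rank_inj.
exists (fun j => @ker K _ (Aset j)); split.
  move=> i _; split; first exact: ker_prime.
  apply: NI_ker => v; have /set0Pn [w] := dI v; rewrite inE => /andP [wI wN].
  by exists w; rewrite // memA wI.
move=> i lti.
have x0 : T by move: szs; case: (s) => [|x ?] /= E; [lia | exact x].
set y := nth x0 s i.
have yti : y \in take i.+1 s by rewrite (take_nth x0) ?szs // mem_rcons inE eqxx.
have yI : y \notin I by rewrite -hs mem_nth ?szs.
have ynt : y \notin take i s by apply: nth_notin_take; rewrite ?szs.
split.
  move=> p hp; have [hid _ _] := @ker_prime K _ (Aset i.+1).
  have := @sig_diff K _ _ (Aset i) hid _ p; rewrite hp subr0; apply => j /imsetP [x xA ->].
  rewrite /ker sig_Xi memA; move: xA; rewrite !inE => /orP [->//|xt].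
  by rewrite (take_nth x0) ?szs // mem_rcons inE xt !orbT.
exists 'X_(enum_rank y); rewrite /ker !sig_Xi !memA yti orbT (negbTE yI) (negbTE ynt).
by split=> // /eqP; apply/negP; apply: X_neq0.
Qed.


Lemma arith_step (m t i r B d : nat) :
  (t * m * (t * d.+1) ^ i <= B * (t * d.+1) ^ r)%N ->
  (m * t ^ i.+1 <= B * d.+1 ^ r * t ^ r)%N.
Proof.
rewrite !expnMn expnS => h.
have hY : (0 < d.+1 ^ i)%N by rewrite expn_gt0.
move: h hY; move: (t ^ i)%N (d.+1 ^ i)%N (t ^ r)%N (d.+1 ^ r)%N => X Y Z W h hY.
nia.
Qed.

Lemma pr_id (R : comRingType) (P : pset R) : is_prime_ideal P -> is_ideal P.
Proof. by case. Qed.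

Lemma upper (K : fieldType) (T : finType) (e : rel T) n (c : nat -> pset {mpoly K[#|T|]}) k :
  #|T| = (2 * n)%N -> (forall D : {set T}, dominating e D -> (n <= #|D|)%N) ->
  prime_chain_over (NI K e) k c -> (k <= n)%N.
Proof.
move=> cT hD [hpr hch].
have [P0pr P0NI] := hpr 0%N isT.
pose D := [set w | pb (c 0%N (vvar K w))].
have dD : dominating e D.
  move=> v; apply/set0Pn.
  have : c 0%N (cnbhd_monomial K e v).
    apply: P0NI; exists (fun u => if u == v then 1 else 0).
    rewrite (bigD1 v) //= eqxx mul1r big1 ?addr0 // => u /negbTE ->; exact: mul0r.
  rewrite /cnbhd_monomial -big_enum => /(prime_prod P0pr) [w].
  by rewrite mem_enum => wN cw; exists w; rewrite in_setI wN andbT inE; apply/pbE.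
have nD := hD D dD.
pose A0 : {set 'I_#|T|} := enum_rank @: D.
have hA0 : forall i, i \in A0 -> c 0%N 'X_i.
  by move=> i /imsetP [w]; rewrite inE => /pbE cw ->.
have cA0 : #|A0| = #|D| by rewrite card_imset //; apply: enum_rank_inj.
set r := #|~: A0|.
have rn : (r <= n)%N.
  by have := cardsC A0; rewrite card_ord cA0 -/r => h; lia.
have claim : forall i, (i <= k)%N -> exists B, forall t m F,
    findep (c i) m F -> (forall j, (j < m)%N -> (msize (F j) <= t)%N) ->
    (m * t ^ i <= B * t ^ r)%N.
  elim=> [_|i IH lik].
    exists 1%N => t m F hF hFs; rewrite expn0 muln1 mul1n.
    exact: (claim0 (pr_id P0pr) hA0 hF hFs).
  have [B hB] := IH (ltnW lik).
  have [sub [f [Qf Pf]]] := hch i lik.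
  exists (B * (msize f).-1.+1 ^ r)%N => t m F hF hFs.
  have [G [hG hGs]] := iterfam (hpr i (ltnW lik)).1 (pr_id (hpr i.+1 lik).1) sub Qf Pf hF hFs t.
  apply: arith_step; rewrite mulnSr addnC; exact: hB hG hGs.
have [B hB] := claim k (leqnn k).
rewrite leqNgt; apply/negP => ltnk.
have ltrk : (r < k)%N by lia.
have h1 : findep (c k) 1 (fun _ => 1).
  move=> a; rewrite big_ord1 => ha j; rewrite ltnS leqn0 => /eqP ->.
  case: (eqVneq (a 0%N) 0) => // anz; exfalso.
  have [[[_ _ PM] P1 _] _] := hpr k (leqnn k).
  apply: P1; have := PM (a 0%N)^-1%:MP _ ha.
  by rewrite mul_mpolyC scalerA mulVf // scale1r.
have := hB B.+1 1%N _ h1; rewrite mul1n => /(_ _) h.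
have h2 : forall j, (j < 1)%N -> (msize (1 : {mpoly K[#|T|]}) <= B.+1)%N.
  by move=> j _; rewrite -mpolyC1 msizeC oner_eq0.
have := h h2.
have := @leq_pexp2l B.+1 r.+1 k isT ltrk; rewrite expnS.
have : (0 < B.+1 ^ r)%N by rewrite expn_gt0.
move: (B.+1 ^ r)%N (B.+1 ^ k)%N => X Y; nia.
Qed.


Local Close Scope ring_scope.

Theorem lemma4p3 (K : fieldType) (T : finType) (e : rel T) (n : nat) :
  infinite_field K ->
  simple_graph e ->
  very_well_covered e ->
  #|T| = (2 * n)%N ->
  krull_dim_quot_ge (NI K e) n /\
  (well_dominated e -> krull_dim_quot_eq (NI K e) n).
Proof.
move=> _ sg [_ vwc] cT.
have [I mI] := exists_maxind e.
have cI : #|I| = n by have := vwc I mI; rewrite cT; lia.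
have LB : krull_dim_quot_ge (NI K e) n.
  exact: (lower K (maxind_dom sg mI) cI cT).
split=> // wd; split=> // k c hc.
apply: (upper cT _ hc) => D dD.
have [D' [sD' mD']] := dom_mindom dD.
have := wd D' I mD' (maxind_mindom sg mI); rewrite cI => <-.
exact: subset_leq_card.
Qed.
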